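(* Let $d_1,\dots,d_n\ge1$, $\mu_i=x_i^{d_i}$, $I=\langle\mu_1,\dots,\mu_n\rangle\subseteq\mathbb K[x_1,\dots,x_n]$, and $k\ge1$ an integer. Then $I^k$ is good if and only if $I^k$ is very good.
   Context: Let $\mathbb K$ be a field, $R=\mathbb K[x_1,\dots,x_n]$, $\mathfrak m=\langle x_1,\dots,x_n\rangle$, $\mathbb N=\{0,1,2,\dots\}$. A monomial $x_1^{\alpha_1}\cdots x_n^{\alpha_n}$ is identified with the point $(\alpha_1,\dots,\alpha_n)\in\mathbb N^n$. For a monomial ideal $K$, $G(K)$ denotes its (unique) minimal monomial generating set. If $K$ is an $\mathfrak m$-primary monomial ideal, then for each $i$ there is a unique $e_i\ge1$ with $x_i^{e_i}\in G(K)$; write $\nu_i=x_i^{e_i}$ (for $K=I^k$ as in the claim, $e_i=kd_i$). For $(a_1,\dots,a_n)\in\mathbb N^n$ the box associated to $K$ is $B_{a_1,\dots,a_n}=([a_1e_1,(a_1+1)e_1]\times\cdots\times[a_ne_n,(a_n+1)e_n])\cap\mathbb N^n$; a monomial belongs to a box if its exponent vector does. $K$ is called good if for every integer $l\ge1$, every element of $G(K^l)$ belongs to some box $B_{a_1,\dots,a_n}$ with $a_1+\dots+a_n=l-1$. For a good ideal $K$ and $a\in\mathbb N^n$, with $l=a_1+\dots+a_n+1$, define $K_{a}=\left\langle \frac{m}{\nu_1^{a_1}\cdots\nu_n^{a_n}} : m\in B_{a}\cap G(K^l)\right\rangle$. A good ideal $K$ is called very good if $K_a=K$ for all $a\in\mathbb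 N^n$. *)

(* Defs.v *)
(* Monomial ideals of K[x_1..x_n] are encoded combinatorially:
   a monomial x^alpha is its exponent vector alpha : 'I_n -> nat, and a
   monomial ideal is identified with the (upward closed) set of exponent
   vectors of the monomials it contains. *)
From mathcomp Require Import all_boot.
Set Implicit Arguments. Unset Strict Implicit. Unset Printing Implicit Defensive.

Definition mono (n : nat) := 'I_n -> nat.

Definition mdvd n (a b : mono n) : Prop := forall i, a i <= b i.

Definition mmul n (a b : mono n) : mono n := fun i => a i + b i.
Definition mdiv n (a b : mono n) : mono n := fun i => a i - b i.

Definition xpow n (i : 'I_n) (e : nat) : mono n := fun j => if j == i then e else 0.

Definition mideal n := mono n -> Prop.

Definition mgen n (S : mono n -> Prop) : mideal n :=
  fun b => exists2 a, S a & mdvd a b.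

Fixpoint mpow n (K : mideal n) (l : nat) : mideal n :=
  match l with
  | 0 => fun _ => True
  | l'.+1 => fun b => exists a c, [/\ K a, mpow K l' c & mdvd (mmul a c) b]
  end.

Definition mideal_eq n (J K : mideal n) : Prop := forall b, J b <-> K b.

Definition mingens n (K : mideal n) : mono n -> Prop :=
  fun m => K m /\ forall m', K m' -> mdvd m' m -> m' = m.

Definition pure_gens n (K : mideal n) (e : mono n) : Prop :=
  forall i, 1 <= e i /\ mingens K (xpow i (e i)).

Definition msum n (a : mono n) : nat := \sum_(i < n) a i.

Definition in_box n (e a m : mono n) : Prop :=
  forall i, a i * e i <= m i /\ m i <= (a i).+1 * e i.

Definition box_cond n (K : mideal n) (e : mono n) : Prop :=
  forall l, 1 <= l -> forall m, mingens (mpow K l) m ->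
    exists a : mono n, msum a = l.-1 /\ in_box e a m.

Definition good n (K : mideal n) : Prop :=
  exists e, pure_gens K e /\ box_cond K e.

(* K_a = < m / (nu_1^{a_1} ... nu_n^{a_n}) : m in B_a cap G(K^l) >, l = |a|+1;
   nu_1^{a_1}...nu_n^{a_n} has exponent vector (a_i e_i)_i *)
Definition K_sub n (K : mideal n) (e a : mono n) : mideal n :=
  mgen (fun q => exists2 m, in_box e a m /\ mingens (mpow K (msum a).+1) m
                          & q = mdiv m (fun i => a i * e i)).

Definition very_good n (K : mideal n) : Prop :=
  exists e, [/\ pure_gens K e, box_cond K e & forall a, mideal_eq (K_sub K e a) K].

Definition Ipure n (d : mono n) : mideal n := mgen (fun a => exists i, a = xpow i (d i)).

(* Main.v *)
From Stdlib Require Import FunctionalExtensionality.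
Require Import Defs.
From mathcomp Require Import all_boot.
From mathcomp Require Import zify.
Set Implicit Arguments. Unset Strict Implicit. Unset Printing Implicit Defensive.

Lemma msum_add n (a b : mono n) : msum (fun i => a i + b i) = msum a + msum b.
Proof. by rewrite /msum big_split. Qed.

Lemma msum_le n (a b : mono n) : (forall i, a i <= b i) -> msum a <= msum b.
Proof. move=> h; rewrite /msum; apply: leq_sum => i _; exact: h. Qed.

Lemma msum_sub n (a b : mono n) : (forall i, a i <= b i) ->
  msum (fun i => b i - a i) = msum b - msum a.
Proof.
move=> h.
have -> : msum b = msum (fun i => a i + (b i - a i)).
  by rewrite /msum; apply: eq_bigr => i _; rewrite subnKC.
by rewrite msum_add addKn.
Qed.

Lemma msum_D1 n (c : mono n) i : msum c = c i + \sum_(j < n | j != i) c j.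
Proof. by rewrite /msum (bigD1 i). Qed.

Lemma msum_ge n (c : mono n) i : c i <= msum c.
Proof. by rewrite (msum_D1 c i) leq_addr. Qed.

Lemma msum_xpow n (i : 'I_n) v : msum (xpow i v) = v.
Proof. rewrite (msum_D1 _ i) /xpow eqxx big1 ?addn0 // => j /negbTE ->. by []. Qed.

Lemma msum_pos n (c : mono n) : 0 < msum c -> exists i, 0 < c i.
Proof.
move=> h. case: (boolP [exists i, 0 < c i]) => [/existsP//|/existsPn hn].
exfalso.
have : msum c <= msum (fun _ : 'I_n => 0).
  apply: msum_le => i. by move: (hn i); rewrite lt0n negbK => /eqP ->.
have h0 : msum (fun _ : 'I_n => 0) = 0 by rewrite /msum big1.
rewrite h0. lia.
Qed.

Lemma msum_split n p (c : mono n) : p <= msum c ->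
  exists c1 : mono n, (forall i, c1 i <= c i) /\ msum c1 = p.
Proof.
elim: p => [|p IH] h.
  exists (fun _ => 0); split => //; rewrite /msum big1 //.
have [c1 [h1 h2]] := IH (ltnW h).
have : 0 < msum (fun i => c i - c1 i) by rewrite msum_sub // h2 subn_gt0.
case/msum_pos => i hi.
exists (mmul c1 (xpow i 1)); split.
  move=> j; rewrite /mmul /xpow; case: eqP => [->|_]; [lia | rewrite addn0; exact: h1].
by rewrite /mmul msum_add msum_xpow h2 addn1.
Qed.

Definition Pd n (d : mono n) p (b : mono n) :=
  exists c : mono n, msum c = p /\ forall i, d i * c i <= b i.

Lemma Ipure_P n (d : mono n) b : (forall i, 1 <= d i) -> (Ipure d b <-> Pd d 1 b).
Proof.
move=> hd; split.
- case=> a [i ->] hab. exists (xpow i 1); split; first exact: msum_xpow.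
  move=> j; move: (hab j); rewrite /xpow; case: eqP => [->|_]; rewrite ?muln1 ?muln0 //.
- case=> c [hc hb]. have [i hi] : exists i, 0 < c i by apply: msum_pos; rewrite hc.
  exists (xpow i (d i)); first by exists i.
  move=> j; rewrite /xpow; case: eqP => [->|_] //. apply: leq_trans (hb i).
  by rewrite leq_pmulr.
Qed.

Lemma mpow_P n (d : mono n) (K : mideal n) p :
  (forall b, K b <-> Pd d p b) -> forall l b, mpow K l b <-> Pd d (p * l) b.
Proof.
move=> hK; elim=> [|l IH] b /=.
  split=> // _. exists (fun _ => 0); split; first by rewrite muln0 /msum big1.
  by move=> i; rewrite muln0.
split.
- case=> a [c [/hK [c1 [s1 h1]] /IH [c2 [s2 h2]] hdv]].
  exists (mmul c1 c2); split; first by rewrite /mmul msum_add s1 s2 mulnS.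
  move=> i; rewrite /mmul mulnDr. apply: leq_trans (hdv i). rewrite /mmul.
  apply: leq_add; [exact: h1 | exact: h2].
- case=> c [s hb].
  have hsp : p <= msum c by rewrite s mulnS leq_addr.
  have [c1 [le1 s1]] := @msum_split n p c hsp.
  exists (fun i => d i * c1 i), (fun i => d i * (c i - c1 i)). split.
  + apply/hK; exists c1; split => //.
  + apply/IH; exists (fun i => c i - c1 i); split => //.
    rewrite msum_sub // s s1 mulnS addKn; done.
  + move=> i; rewrite /mmul -mulnDr subnKC //.
Qed.

Lemma mingens_ext n (J J' : mideal n) m :
  (forall b, J b <-> J' b) -> mingens J m -> mingens J' m.
Proof. move=> h [hm hmin]; split; first by apply/h. move=> m' /h; exact: hmin. Qed.

Lemma mingens_P n (d : mono n) q m : mingens (Pd d q) m ->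
  exists c : mono n, msum c = q /\ m = (fun i => d i * c i).
Proof.
case=> [[c [s hb]] hmin]; exists c; split => //. symmetry.
apply: hmin; [by exists c | exact: hb].
Qed.

Lemma P_mingens n (d : mono n) (c : mono n) : (forall i, 1 <= d i) ->
  mingens (Pd d (msum c)) (fun i => d i * c i).
Proof.
move=> hd; split; first by exists c.
move=> m' [c' [s' hb']] hdv.
have le : forall i, c' i <= c i.
  move=> i; have := leq_trans (hb' i) (hdv i). by rewrite (leq_pmul2l (hd i)).
have eq : forall i, c' i = c i.
  move=> i. have := msum_sub le; rewrite s' subnn => h0.
  have := msum_ge (fun i => c i - c' i) i. rewrite h0 /= => h1. have := le i. lia.
apply: functional_extensionality => i.
have := hb' i; have := hdv i; rewrite /= (eq i); lia.
Qed.

Lemma e_val n (d : mono n) (K : mideal n) k e : (forall i, 1 <= d i) ->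
  (forall b, K b <-> Pd d k b) -> pure_gens K e -> forall i, e i = d i * k.
Proof.
move=> hd hK he i. have [_ mg] := he i.
have [c [s hx]] := mingens_P (mingens_ext hK mg).
have h0 : forall j, j != i -> c j = 0.
  move=> j hj. have := congr1 (fun f => f j) hx.
  rewrite /xpow (negbTE hj) /= => /esym/eqP.
  rewrite muln_eq0 => /orP [/eqP hdj|/eqP //]. by move: (hd j); rewrite hdj.
have : msum c = c i by rewrite (msum_D1 c i) big1 ?addn0.
rewrite s => ->. have := congr1 (fun f => f i) hx. by rewrite /xpow eqxx.
Qed.

Theorem mainTheorem19 (n : nat) (d : 'I_n -> nat) (k : nat) :
  (forall i, 1 <= d i) -> 1 <= k ->
  (good (mpow (Ipure d) k) <-> very_good (mpow (Ipure d) k)).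
Proof.
move=> hd hk.
have hI := fun b => @Ipure_P n d b hd.
have hK : forall b, mpow (Ipure d) k b <-> Pd d k b.
  move=> b; rewrite -[k in Pd d k]mul1n; exact: mpow_P hI k b.
have hKl := mpow_P hK.
split; last first.
  by case=> e [pe bc _]; exists e; split.
case=> e [pe bc]. exists e; split => // a b.
have he := e_val hd hK pe.
split.
- case=> q [m [inb mg] ->] hq. apply/hK.
  have mg' := mingens_ext (hKl _) mg. case/mingens_P: mg' => c [s hm]. subst m.
  have hak : forall i, a i * k <= c i.
    move=> i; have [h1 _] := inb i; move: h1.
    by rewrite /= he mulnCA (leq_pmul2l (hd i)).
  exists (fun i => c i - a i * k); split.
  + rewrite msum_sub // s.
    have -> : msum (fun i => a i * k) = msum a * k by rewrite /msum big_distrl.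
    rewrite mulnS mulnC; lia.
  + move=> i; move: (hq i); rewrite /mdiv /= he.
    have -> : d i * (c i - a i * k) = d i * c i - a i * (d i * k)
      by rewrite mulnBr mulnCA.
    by [].
- move/hK => [c' [s' hb']].
  exists (fun i => d i * c' i).
  + exists (fun i => d i * (c' i + a i * k)).
    * split.
      - move=> i; rewrite he.
        have hc : c' i <= k by rewrite -s' msum_ge.
        have := leq_mul (leqnn (d i)) hc. nia.
      - apply: (mingens_ext (fun b => iff_sym (hKl _ b))).
        have -> : k * (msum a).+1 = msum (fun i => c' i + a i * k).
          rewrite msum_add s' /msum -big_distrl /=. nia.
        exact: P_mingens hd.
    * apply: functional_extensionality => i; rewrite /mdiv /= he. lia.
  + move=> i; exact: hb' i.
Qed.
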